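(* There is an absolute constant $C>0$ such that for every degree sequence $\mathbf d=(d_1,\ldots,d_n)$ and every $v\in[n]$, \[\mathbb P(\mathfrak t_n(v)=0)\le C\Big(d_v\,\frac{\mathbb E[\mathfrak s_n(v)]}{n}+d_v\,n\,\mathbb P(\mathfrak s_n(v)>n/2)\Big).\]
   Context: A degree sequence is $\mathbf d=(d_1,\ldots,d_n)\in\mathbb N_0^n$ with $\sum_j d_j=n$. Let $\mathfrak F(\mathbf d)=\{f:[n]\to[n]: |f^{-1}(\{i\})|=d_i\ \forall i\}$ and $F$ uniform on $\mathfrak F(\mathbf d)$. For $f:V\to V$, $v\in V$: six-length $\mathfrak s_f(v)=\min\{k\in\mathbb N: f^{(k)}(v)\in\{f^{(j)}(v):0\le j\le k-1\}\}$ ($f^{(k)}$ the $k$-fold composition, $f^{(0)}=\mathrm{id}$); tail-length $\mathfrak t_f(v)$ is the unique integer with $0\le\mathfrak t_f(v)<\mathfrak s_f(v)$ and $f^{(\mathfrak s_f(v))}(v)=f^{(\mathfrak t_f(v))}(v)$. $\mathfrak s_n(v)=\mathfrak s_F(v)$, $\mathfrak t_n(v)=\mathfrak t_F(v)$. *)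

(* Defs.v *)
From HB Require Import structures.
From mathcomp Require Import all_boot all_order all_algebra.
Set Implicit Arguments. Unset Strict Implicit. Unset Printing Implicit Defensive.
Import Order.TTheory GRing.Theory Num.Theory.

Section SixTail.
Variable T : finType.

Definition six_cand (f : T -> T) (v : T) (k : nat) : bool :=
  (0 < k) && (iter k f v \in traject f v k).

Lemma six_cand_ex (f : T -> T) (v : T) : exists k, six_cand f v k.
Proof. exists (order f v); rewrite /six_cand order_gt0; exact: looping_order. Qed.

Definition sixlen (f : T -> T) (v : T) : nat := ex_minn (six_cand_ex f v).

Definition taillen (f : T -> T) (v : T) : nat :=
  index (iter (sixlen f v) f v) (traject f v (sixlen f v)).
End SixTail.

Definition Fdeg (n : nat) (d : 'I_n -> nat) : {set {ffun 'I_n -> 'I_n}} :=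
  [set f : {ffun 'I_n -> 'I_n} | [forall i, #|[set x | f x == i]| == d i]].

Local Open Scope ring_scope.

Definition Pr (n : nat) (d : 'I_n -> nat) (P : pred {ffun 'I_n -> 'I_n}) : rat :=
  #|[set f in Fdeg d | P f]|%:R / #|Fdeg d|%:R.

Definition Ex (n : nat) (d : 'I_n -> nat) (X : {ffun 'I_n -> 'I_n} -> nat) : rat :=
  (\sum_(f in Fdeg d) (X f)%:R) / #|Fdeg d|%:R.

(* Main.v *)
Require Import Defs.
From HB Require Import structures.
From mathcomp Require Import all_boot all_order all_algebra.
From mathcomp Require Import zify ring lra.
Import Order.TTheory GRing.Theory Num.Theory.

Set Implicit Arguments.
Section Gen.
Variable T : finType.
Implicit Types (f : T -> T) (v : T).

Lemma sixlen_spec f v : [/\ 0 < sixlen f v, iter (sixlen f v) f v \in traject f v (sixlen f v)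
   & forall m, 0 < m -> iter m f v \in traject f v m -> sixlen f v <= m].
Proof.
rewrite /sixlen; case: ex_minnP => m /andP[m0 mi] mmin; split=> // k k0 ki.
by apply: mmin; rewrite /six_cand k0.
Qed.

Lemma uniq_traj_six f v : uniq (traject f v (sixlen f v)).
Proof.
have [_ _ mn] := sixlen_spec f v.
have: sixlen f v <= sixlen f v by [].
elim: {1 3}(sixlen f v) => [//|m IH] lt.
rewrite trajectSr rcons_uniq IH ?andbT; last by apply: ltnW.
case: m IH lt => [|m] IH lt; first by [].
apply/negP => hin; have := mn _ (ltn0Sn m) hin; rewrite leqNgt lt //.
Qed.

Lemma le_sixlen f v k : uniq (traject f v k) -> k <= sixlen f v.
Proof.
move=> u; rewrite leqNgt; apply/negP => lt.
have [s0 sin _] := sixlen_spec f v.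
have : uniq (traject f v (sixlen f v + (k - sixlen f v))) by rewrite subnKC // ltnW.
rewrite trajectD cat_uniq => /and3P[_ /hasPn H _].
have hin : iter (sixlen f v) f v \in traject f (iter (sixlen f v) f v) (k - sixlen f v).
  by case E: (k - _) => [|j]; [move: lt; rewrite -subn_gt0 E | rewrite /= inE eqxx].
by have := H _ hin; rewrite sin.
Qed.
End Gen.
Arguments le_sixlen {T f v k}.

Set Implicit Arguments.
Section Gen.
Variable T : finType.
Implicit Types (f : T -> T) (v : T).

Lemma taillen0 f v : taillen f v = 0 -> iter (sixlen f v) f v = v.
Proof.
have [s0 _ _] := sixlen_spec _ f v; move: s0.
rewrite /taillen; case: (sixlen f v) => [|s] //= _.
by case: eqP.
Qed.

Definition sw (a w x : T) := if x == a then w else if x == w then a else x.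
Lemma sw_inv a w x : sw a w (sw a w x) = x.
Proof.
rewrite /sw; case: (eqVneq x a) => [->|xa]; rewrite ?eqxx.
  by case: (eqVneq w a) => [->|wa] //; rewrite eqxx.
case: (eqVneq x w) => [->|xw]; first by rewrite eqxx.
by rewrite (negPf xa) (negPf xw).
Qed.
Lemma sw_inj a w : injective (sw a w).
Proof. exact: (can_inj (sw_inv a w)). Qed.
Lemma sw_w a w : sw a w w = a.
Proof. by rewrite /sw eqxx; case: (eqVneq w a). Qed.

Lemma eq_traject f g v k : (forall i, i < k -> iter i g v = iter i f v) ->
  traject g v k = traject f v k.
Proof.
elim: k => [//|k IH] H; rewrite !trajectSr IH ?H // => i ik; apply: H; exact: ltnW.
Qed.

Lemma swap_iter f v k w : 0 < k -> uniq (traject f v k) -> w \notin traject f v k.-1 ->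
  forall i, i <= k.-1 -> iter i (f \o sw (iter k.-1 f v) w) v = iter i f v.
Proof.
move=> k0 u wn; elim=> [//|i IH] lt; rewrite !iterS IH; last exact: ltnW.
rewrite /=.
have hi : iter i f v \in traject f v k.-1 by apply/trajectP; exists i.
move: u; rewrite -(prednK k0) trajectSr rcons_uniq => /andP[an _].
rewrite /sw; case: eqP => [E|_]; first by move: an; rewrite -E hi.
by case: eqP => [E|_] //; move: wn; rewrite -E hi.
Qed.
End Gen.
Arguments sw {T}.
Arguments swap_iter {T f v k w}.
Arguments eq_traject {T} f g {v k}.
Arguments taillen0 {T f v}.
Arguments sw_inv {T}.
Arguments sw_w {T}.
Arguments sw_inj {T}.
Unset Implicit Arguments.

Lemma lt_of_2 k m : 0 < k -> 2 * k <= m -> k.-1 < m.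
Proof. move=> h1 h2; apply: leq_ltn_trans (leq_pred _) _; lia. Qed.

Section Main.
Variables (n : nat) (d : 'I_n.+1 -> nat) (v : 'I_n.+1).
Local Notation FT := {ffun 'I_n.+1 -> 'I_n.+1}.
Local Notation F := (Fdeg d).
Local Notation s f := (sixlen f v).

Definition T0' := [set f in F | (taillen f v == 0) && (2 * s f <= n.+1)].
Definition D := [set p : FT * 'I_n.+1 | (p.1 \in T0') && (p.2 \notin traject p.1 v (s p.1).-1)].
Definition E := [set q : FT * 'I_n.+1 * 'I_n.+1 |
  (q.1.1 \in F) && (q.2 < s q.1.1) && (q.1.1 q.1.2 == v)].
Definition gsw (f : FT) (w : 'I_n.+1) : FT := [ffun x => f (sw (iter (s f).-1 f v) w x)].
Definition phi (p : FT * 'I_n.+1) := (gsw p.1 p.2, p.2, inord (s p.1).-1 : 'I_n.+1).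

Lemma inF_gsw f w : f \in F -> gsw f w \in F.
Proof.
rewrite !inE => /forallP H; apply/forallP => i.
have -> : [set x | gsw f w x == i] = sw (iter (s f).-1 f v) w @^-1: [set x | f x == i].
  by apply/setP => x; rewrite !inE ffunE.
by rewrite card_preimset //; exact: sw_inj.
Qed.

Lemma D_facts p : p \in D -> [/\ p.1 \in F, taillen p.1 v = 0, 2 * s p.1 <= n.+1,
   p.2 \notin traject p.1 v (s p.1).-1 & uniq (traject p.1 v (s p.1))].
Proof.
by rewrite !inE => /andP[/and3P[-> /eqP -> ->] ->]; split => //; apply: uniq_traj_six.
Qed.

Lemma gsw_iter p : p \in D -> forall i, i <= (s p.1).-1 ->
  iter i (gsw p.1 p.2) v = iter i p.1 v.
Proof.
move=> /D_facts [_ _ _ wn u] i le.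
have [s0 _ _] := sixlen_spec _ p.1 v.
rewrite -(swap_iter s0 u wn _ le); apply: eq_iter => x; by rewrite ffunE.
Qed.

Lemma phi_inj : {in D &, injective phi}.
Proof.
move=> [f1 w1] [f2 w2] H1 H2 [eg ew ek] /=; subst w2.
have [s1 _ _] := sixlen_spec _ f1 v.
have [s2 _ _] := sixlen_spec _ f2 v.
have [_ _ l1 _ _] := D_facts _ H1; have [_ _ l2 _ _] := D_facts _ H2.
rewrite /= in l1 l2.
move/(congr1 (@nat_of_ord _)): ek; rewrite !inordK; first last.
- by apply: leq_ltn_trans (leq_pred _) _; lia.
- by apply: leq_ltn_trans (leq_pred _) _; lia.
move=> ek.
have ek' : s f1 = s f2 by rewrite -(prednK s1) -(prednK s2) ek.
have a1 := gsw_iter _ H1 _ (leqnn _); have a2 := gsw_iter _ H2 _ (leqnn _).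
rewrite /= in a1 a2.
have ab : iter (s f1).-1 f1 v = iter (s f2).-1 f2 v by rewrite -a1 -a2 -ek' eg.
congr pair; apply/ffunP => x.
have := congr1 (fun g : FT => g (sw (iter (s f1).-1 f1 v) w1 x)) eg.
by rewrite /= /gsw !ffunE -!ab !sw_inv.
Qed.

Lemma phi_sub : phi @: D \subset E.
Proof.
apply/subsetP => q /imsetP [p H ->].
have [hF ht l wn u] := D_facts _ H.
have [s0 _ _] := sixlen_spec _ p.1 v.
rewrite inE /= inF_gsw //= inordK; last exact: lt_of_2 s0 l.
apply/andP; split.
  have : s p.1 <= s (gsw p.1 p.2).
    apply: le_sixlen; rewrite (eq_traject p.1 _) // => i ilt.
    by apply: (gsw_iter _ H); rewrite -ltnS prednK.
  by rewrite prednK.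
rewrite /gsw ffunE sw_w -iterS prednK //.
by apply/eqP; apply: taillen0.
Qed.

Lemma card_DE : #|D| <= #|E|.
Proof.
rewrite -(card_in_imset phi_inj); exact: subset_leq_card phi_sub.
Qed.
End Main.

Lemma card_lt m (s : nat) : #|[pred k : 'I_m | k < s]| <= s.
Proof.
rewrite cardE -(size_map val) -[X in _ <= X](size_iota 0 s); apply: uniq_leq_size.
  by rewrite (map_inj_uniq val_inj) enum_uniq.
by move=> x /mapP [k]; rewrite mem_enum inE => hk ->; rewrite mem_iota.
Qed.

Lemma aux_ineq s m : 0 < s -> 2 * s <= m -> m <= 2 * (m - s.-1).
Proof. case: s => [//|s] /= _; lia. Qed.

Section Main.
Variables (n : nat) (d : 'I_n.+1 -> nat) (v : 'I_n.+1).
Local Notation FT := {ffun 'I_n.+1 -> 'I_n.+1}.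
Local Notation F := (Fdeg d).
Local Notation s f := (sixlen f v).

Lemma claim3 : n.+1 * #|T0' n d v| <= 2 * #|D n d v|.
Proof.
have eD : #|D n d v| = \sum_(f in T0' n d v) #|[pred w : 'I_n.+1 | w \notin traject f v (s f).-1]|.
  transitivity (\sum_(f in T0' n d v) \sum_(w | w \notin traject f v (s f).-1) 1).
    rewrite pair_big_dep -sum1_card; apply: eq_bigl => -[f w]; by rewrite /D in_set.
  by apply: eq_bigr => f _; rewrite sum1_card.
rewrite eD big_distrr /= mulnC -sum_nat_const.
apply: leq_sum => f; rewrite /T0' in_set => /andP[_ /andP[_ l]].
have [s0 _ _] := sixlen_spec _ f v.
have u : uniq (traject f v (s f).-1).
  by move: (uniq_traj_six _ f v); rewrite -(prednK s0) trajectSr rcons_uniq => /andP[].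
have := cardC (mem (traject f v (s f).-1)).
rewrite card_ord (card_uniqP u) size_traject => hc.
have -> : #|[pred w : 'I_n.+1 | w \notin traject f v (s f).-1]| = n.+1 - (s f).-1.
  have -> : #|[pred w : 'I_n.+1 | w \notin traject f v (s f).-1]| =
            #|[predC (traject f v (s f).-1)]| by apply: eq_card => w; rewrite !inE.
  move: hc; move: #|[predC _]| => c; move: (s f).-1 => t; lia.
exact: aux_ineq.
Qed.

Lemma claim4 : #|E n d v| <= d v * \sum_(f in F) s f.
Proof.
have eE : #|E n d v| = \sum_(p : FT * 'I_n.+1 | (p.1 \in F) && (p.1 p.2 == v))
    \sum_(k : 'I_n.+1 | k < s p.1) 1.
  rewrite pair_big_dep -sum1_card; apply: eq_bigl => -[[f w] k]; rewrite /E in_set /=.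
  by rewrite -!andbA; congr andb; rewrite andbC.
rewrite eE; apply: (@leq_trans (\sum_(p : FT * 'I_n.+1 | (p.1 \in F) && (p.1 p.2 == v)) s p.1)).
  by apply: leq_sum => p _; rewrite sum1_card; exact: card_lt.
have -> : \sum_(p : FT * 'I_n.+1 | (p.1 \in F) && (p.1 p.2 == v)) s p.1 =
   \sum_(f in F) \sum_(w | f w == v) s f by rewrite pair_big_dep.
rewrite big_distrr /=.
apply: leq_sum => f fF; rewrite sum_nat_const; apply: leq_mul => //.
move: fF; rewrite inE => /forallP /(_ v) /eqP <-.
by apply: eq_leq; apply: eq_card => x; rewrite !inE.
Qed.
End Main.

Local Open Scope ring_scope.

Theorem lemma3p13 :
  exists C : rat, 0 < C /\
  forall (n : nat) (d : 'I_n -> nat), (\sum_(i < n) d i)%N = n ->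
  forall v : 'I_n,
    Pr d (fun f => taillen f v == 0%N) <=
    C * ((d v)%:R * Ex d (fun f => sixlen f v) / n%:R
         + (d v)%:R * n%:R * Pr d (fun f => (n%:R / 2 : rat) < (sixlen f v)%:R)).
Proof.
exists 2; split => //.
case=> [|n] d hd v; first by case: v.
rewrite /Pr /Ex /=.
rewrite -natr_sum.
set S := (\sum_(f in Fdeg d) sixlen f v)%N.
set N := #|Fdeg d|.
set As := [set f in Fdeg d | taillen f v == 0%N].
set Bs := [set f in Fdeg d | n.+1%:R / 2 < (sixlen f v)%:R].
have h1 : (#|As| <= #|T0' n d v| + #|Bs|)%N.
  apply: leq_trans (leq_card_setU _ _).1.
  apply: subset_leq_card; apply/subsetP => f; rewrite !inE => /andP[fF t0].
  rewrite fF t0 /=; case: leqP => //= lt.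
  rewrite ltr_pdivrMr // -natrM ltr_nat; lia.
have h3 : (n.+1 * #|T0' n d v| <= 2 * (d v * S))%N.
  apply: leq_trans (claim3 _ d v) _; rewrite leq_mul2l /=.
  exact: leq_trans (card_DE _ d v) (claim4 _ d v).
have hd0 : d v = 0%N -> #|As| = 0%N.
  move=> dv0; apply/eqP; rewrite cards_eq0; apply/eqP/setP => f; rewrite !inE.
  apply/negP => /andP[fF /eqP t0].
  have := taillen0 t0; have [s0 _ _] := sixlen_spec _ f v.
  rewrite -(prednK s0) iterS => hx.
  move: fF => /forallP /(_ v); rewrite dv0 cards_eq0 => /eqP /setP
    /(_ (iter (sixlen f v).-1 f v)); rewrite !inE hx eqxx //.
have [N0|Npos] := eqVneq N 0%N.
  by rewrite N0 !(invr0, mulr0, mul0r, addr0).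
rewrite ler_pdivrMr ?ltr0n ?lt0n //.
have key : 2 * ((d v)%:R * (S%:R / N%:R) / n.+1%:R + (d v)%:R * n.+1%:R * (#|Bs|%:R / N%:R)) * N%:R
   = (2 * (d v * S))%:R / n.+1%:R + (2 * d v * n.+1 * #|Bs|)%:R :> rat.
  by rewrite !natrM; field; rewrite pnatr_eq0 Npos andbT paddr_eq0 // oner_eq0.

rewrite key.
have [dv0|dvpos] := eqVneq (d v) 0%N.
  by rewrite hd0 // dv0 !(muln0, mul0n, mulr0, mul0r, addr0).
apply: le_trans (_ : (#|T0' n d v| + #|Bs|)%:R <= _); first by rewrite ler_nat.
rewrite natrD; apply: lerD.
  by rewrite ler_pdivlMr ?ltr0n // -natrM ler_nat mulnC.
rewrite ler_nat -[X in (X <= _)%N]mul1n leq_mul2r; apply/orP; right.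
have : (0 < d v)%N by rewrite lt0n.
lia.
Qed.
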